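(* Let $N\ge 1$. Inside $S^{N-1}_{\mathbb R,+}$ the following equalities hold: $$S^{N-1}_{\mathbb R}\cap\bar S^{N-1}_{\mathbb R}=S^{N-1,0}_{\mathbb R},\qquad S^{N-1}_{\mathbb R}\cap\bar S^{N-1}_{\mathbb R,*}=S^{N-1,1}_{\mathbb R},$$ $$S^{N-1}_{\mathbb R,*}\cap\bar S^{N-1}_{\mathbb R}=\bar S^{N-1,1}_{\mathbb R},\qquad S^{N-1}_{\mathbb R,*}\cap\bar S^{N-1}_{\mathbb R,*}=S^{N-1,1}_{\mathbb R,*}.$$ Moreover one has the inclusions $S^{N-1,0}_{\mathbb R}\subset S^{N-1,1}_{\mathbb R}\subset S^{N-1}_{\mathbb R}$, $S^{N-1,0}_{\mathbb R}\subset\bar S^{N-1,1}_{\mathbb R}\subset\bar S^{N-1}_{\mathbb R}$, $\bar S^{N-1,1}_{\mathbb R}\subset S^{N-1,1}_{\mathbb R,*}\subset S^{N-1}_{\mathbb R,*}$, $S^{N-1,1}_{\mathbb R}\subset S^{N-1,1}_{\mathbb R,*}\subset\bar S^{N-1}_{\mathbb R,*}$, $\bar S^{N-1}_{\mathbb R}\subset\bar S^{N-1}_{\mathbb R,*}\subset S^{N-1}_{\mathbb R,+}$ and $S^{N-1}_{\mathbb R}\subset S^{N-1}_{\mathbb R,*}\subset S^{N-1}_{\mathbb R,+}$.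
   Context: $C(S^{N-1}_{\mathbb R,+})$ denotes the universal $C^*$-algebra generated by self-adjoint elements $x_1,\dots,x_N$ subject to $\sum_i x_i^2=1$. A noncommutative subspace $X\subset S^{N-1}_{\mathbb R,+}$ is given by a quotient $C(X)$ of $C(S^{N-1}_{\mathbb R,+})$ by relations among the standard coordinates $x_i$; $X\subset Y$ means $C(X)$ is a quotient of $C(Y)$ compatibly with the $x_i$, and $X\cap Y$ is obtained by imposing both sets of relations. Subspheres: $S^{N-1}_{\mathbb R}$: $x_ix_j=x_jx_i$ for all $i,j$ (the usual sphere); $\bar S^{N-1}_{\mathbb R}$: $x_ix_j=-x_jx_i$ for all $i\ne j$; $S^{N-1}_{\mathbb R,*}$: $x_ix_jx_k=x_kx_jx_i$ for all $i,j,k$; $\bar S^{N-1}_{\mathbb R,*}$: $x_ix_jx_k=-x_kx_jx_i$ for $i,j,k$ pairwise distinct and $x_ix_jx_k=x_kx_jx_i$ otherwise. For $d\in\{1,\dots,N\}$, the polygonal versions $S^{N-1,d-1}_{\mathbb R}$, $\bar S^{N-1,d-1}_{\mathbb R}$, $S^{N-1,d-1}_{\mathbb R,*}$, $\bar S^{N-1,d-1}_{\mathbb R,*}$, $S^{N-1,d-1}_{\mathbb R,+}$ are obtained from $S^{N-1}_{\mathbb R}$, $\bar S^{N-1}_{\mathbb R}$, $S^{N-1}_{\mathbb R,*}$, $\bar S^{N-1}_{\mathbb R,*}$, $S^{N-1}_{\mathbb R,+}$ respectively by additionally imposing $x_{i_0}x_{i_1}\cdots x_{i_d}=0$ for all pairwise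 distinct $i_0,\dots,i_d$ (vacuous when $d=N$). *)

(* Defs.v *)
From HB Require Import structures.
From mathcomp Require Import all_boot all_order all_algebra.
Set Implicit Arguments. Unset Strict Implicit. Unset Printing Implicit Defensive.
Import Order.TTheory GRing.Theory Num.Theory.
Local Open Scope ring_scope.

(* Unital (pre-)C*-algebras over a field C of "complex numbers"
   (C : numClosedFieldType, with conjugation z^* ). *)
Record preCstar (C : numClosedFieldType) := PreCstar {
  cs_car :> algType C;
  cs_star : cs_car -> cs_car;
  cs_norm : cs_car -> C;
  cs_star_invol : forall a, cs_star (cs_star a) = a;
  cs_star_add : forall a b, cs_star (a + b) = cs_star a + cs_star b;
  cs_star_scale : forall (c : C) a, cs_star (c *: a) = c^* *: cs_star a;
  cs_star_mul : forall a b, cs_star (a * b) = cs_star b * cs_star a;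
  cs_norm_ge0 : forall a, 0 <= cs_norm a;
  cs_norm_eq0 : forall a, cs_norm a = 0 -> a = 0;
  cs_norm_add : forall a b, cs_norm (a + b) <= cs_norm a + cs_norm b;
  cs_norm_scale : forall (c : C) a, cs_norm (c *: a) = `|c| * cs_norm a;
  cs_norm_mul : forall a b, cs_norm (a * b) <= cs_norm a * cs_norm b;
  cs_norm_cstar : forall a, cs_norm (cs_star a * a) = cs_norm a ^+ 2
}.

(* A noncommutative subspace of S^{N-1}_{R,+}, given by relations among the
   coordinates: a predicate on tuples of elements of (pre-)C*-algebras. *)
Definition ncspace (C : numClosedFieldType) (N : nat) :=
  forall A : preCstar C, ('I_N -> A) -> Prop.

Definition sphere_rel (C : numClosedFieldType) (N : nat) (A : preCstar C)
    (x : 'I_N -> A) : Prop :=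
  (forall i, cs_star (x i) = x i) /\ \sum_(i < N) x i ^+ 2 = 1.

(* X \subset Y : the relations of Y hold in C(X), i.e. in every
   representation of the relations of X (universal property). *)
Definition ncsub (C : numClosedFieldType) (N : nat) (X Y : ncspace C N) : Prop :=
  forall (A : preCstar C) (x : 'I_N -> A),
    sphere_rel x -> X A x -> Y A x.

Definition ncequal (C : numClosedFieldType) (N : nat) (X Y : ncspace C N) : Prop :=
  ncsub X Y /\ ncsub Y X.

Definition nccap (C : numClosedFieldType) (N : nat) (X Y : ncspace C N) : ncspace C N :=
  fun A x => X A x /\ Y A x.

Definition Sfree (C : numClosedFieldType) (N : nat) : ncspace C N :=
  fun A x => True.

Definition Sclass (C : numClosedFieldType) (N : nat) : ncspace C N :=
  fun A x => forall i j, x i * x j = x j * x i.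

Definition Sbar (C : numClosedFieldType) (N : nat) : ncspace C N :=
  fun A x => forall i j, i != j -> x i * x j = - (x j * x i).

Definition Shalf (C : numClosedFieldType) (N : nat) : ncspace C N :=
  fun A x => forall i j k, x i * x j * x k = x k * x j * x i.

Definition Sbarhalf (C : numClosedFieldType) (N : nat) : ncspace C N :=
  fun A x => forall i j k,
    ([&& i != j, j != k & i != k] -> x i * x j * x k = - (x k * x j * x i)) /\
    (~~ [&& i != j, j != k & i != k] -> x i * x j * x k = x k * x j * x i).

(* Polygonal relations with parameter d >= 1 (superscript d-1):
   x_{i_0} x_{i_1} ... x_{i_d} = 0 for pairwise distinct i_0, ..., i_d. *)
Definition poly_rel (C : numClosedFieldType) (N d : nat) : ncspace C N :=
  fun A x => forall t : 'I_d.+1 -> 'I_N, injective t ->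
    \prod_(l < d.+1) x (t l) = 0.

Definition polyg (C : numClosedFieldType) (N d : nat) (X : ncspace C N) : ncspace C N :=
  nccap X (@poly_rel C N d).

Arguments Sfree C N A x : clear implicits.
Arguments Sclass C N A x : clear implicits.
Arguments Sbar C N A x : clear implicits.
Arguments Shalf C N A x : clear implicits.
Arguments Sbarhalf C N A x : clear implicits.
Arguments polyg C N d X A x : clear implicits.

(* Main.v *)
Require Import Defs.
From HB Require Import structures.
From mathcomp Require Import all_boot all_order all_algebra.
Set Implicit Arguments.
Import Order.TTheory GRing.Theory Num.Theory.
Local Open Scope ring_scope.

Lemma half0 (C : numClosedFieldType) (A : preCstar C) (a : A) : a = - a -> a = 0.
Proof.
move=> h.
have h2 : a *+ 2 = 0 by rewrite mulr2n {1}h addNr.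
have : (2%:R^-1 : C) *: (a *+ 2) = a.
  by rewrite -scaler_nat scalerA mulVf ?scale1r // pnatr_eq0.
by rewrite h2 scaler0 => <-.
Qed.

Lemma inj2 (N : nat) (i j : 'I_N) : i != j ->
  injective (fun l : 'I_2 => nth i [:: i; j] l).
Proof.
move=> ij [[|[|a]] Ha] [[|[|b]] Hb] //= E; apply/val_inj => //=;
  by rewrite E eqxx in ij.
Qed.

Lemma inj3 (N : nat) (i j k : 'I_N) : i != j -> j != k -> i != k ->
  injective (fun l : 'I_3 => nth i [:: i; j; k] l).
Proof.
move=> ij jk ik [[|[|[|a]]] Ha] [[|[|[|b]]] Hb] //= E; apply/val_inj => //=;
  by rewrite E eqxx in ij jk ik.
Qed.

Lemma rel2 (C : numClosedFieldType) (N : nat) (A : preCstar C) (x : 'I_N -> A) :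
  poly_rel 1 x <-> forall i j, i != j -> x i * x j = 0.
Proof.
split.
  move=> H i j ij; have := H _ (@inj2 _ i j ij).
  by rewrite !big_ord_recl big_ord0 mulr1.
move=> H t tinj; rewrite !big_ord_recl big_ord0 mulr1; apply: H.
by apply/eqP => /tinj /(congr1 val).
Qed.

Lemma rel3 (C : numClosedFieldType) (N : nat) (A : preCstar C) (x : 'I_N -> A) :
  poly_rel 2 x <-> forall i j k, i != j -> j != k -> i != k -> x i * x j * x k = 0.
Proof.
split.
  move=> H i j k ij jk ik; have := H _ (@inj3 _ i j k ij jk ik).
  by rewrite !big_ord_recl big_ord0 mulr1 mulrA.
move=> H t tinj; rewrite !big_ord_recl big_ord0 mulr1 mulrA; apply: H;
by apply/eqP => /tinj /(congr1 val).
Qed.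

Section L.
Variables (C : numClosedFieldType) (N : nat) (A : preCstar C) (x : 'I_N -> A).

Lemma class_half : Sclass C N A x -> Shalf C N A x.
Proof.
move=> H i j k.
by rewrite -mulrA [x j * x k]H mulrA [x i * x k]H -mulrA [x i * x j]H mulrA.
Qed.

Lemma bar_nd : Sbar C N A x -> forall i j k,
  ~~ [&& i != j, j != k & i != k] -> x i * x j * x k = x k * x j * x i.
Proof.
move=> H i j k.
case: (eqVneq i k) => [-> //|ik].
case: (eqVneq i j) => [ij' _|ij].
  by rewrite -ij' -mulrA (H i k ik) mulrN mulrA (H i k ik) mulNr opprK.
case: (eqVneq j k) => [-> _|jk] //.
by rewrite (H i k ik) mulNr -[x k * x i * x k]mulrA (H i k ik) mulrN opprK mulrA.
Qed.

Lemma bar_d : Sbar C N A x -> forall i j k, i != j -> j != k -> i != k ->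
  x i * x j * x k = - (x k * x j * x i).
Proof.
move=> H i j k ij jk ik.
by rewrite (H i j ij) mulNr -[x j * x i * x k]mulrA (H i k ik) mulrN opprK mulrA (H j k jk) mulNr.
Qed.

Lemma p2_sym : poly_rel 2 x -> forall i j k, i != j -> j != k -> i != k ->
  x i * x j * x k = 0 /\ x k * x j * x i = 0.
Proof.
move/rel3=> H i j k ij jk ik; split; apply: H => //; by rewrite eq_sym.
Qed.

Lemma cb_p1 : Sclass C N A x -> Sbar C N A x -> poly_rel 1 x.
Proof.
move=> Hc Hb; apply/rel2 => i j ij; apply: half0.
by rewrite {1}(Hb i j ij) (Hc j i).
Qed.

Lemma p1_bar : poly_rel 1 x -> Sbar C N A x.
Proof.
move/rel2=> H i j ij; rewrite H // H ?oppr0 // eq_sym //.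
Qed.

Lemma p1_p2 : poly_rel 1 x -> poly_rel 2 x.
Proof.
move/rel2=> H; apply/rel3 => i j k ij _ _; by rewrite H // mul0r.
Qed.

Lemma half_p2_barhalf : Shalf C N A x -> poly_rel 2 x -> Sbarhalf C N A x.
Proof.
move=> Hh Hp i j k; split; last by move=> _; exact: Hh.
case/and3P=> ij jk ik; have [-> ->] := p2_sym Hp i j k ij jk ik; by rewrite oppr0.
Qed.

Lemma class_p2_barhalf : Sclass C N A x -> poly_rel 2 x -> Sbarhalf C N A x.
Proof. by move/class_half; exact: half_p2_barhalf. Qed.

Lemma bar_barhalf : Sbar C N A x -> Sbarhalf C N A x.
Proof.
move=> H i j k; split; last exact: bar_nd.
by case/and3P; exact: bar_d.
Qed.

Lemma bar_p2_half : Sbar C N A x -> poly_rel 2 x -> Shalf C N A x.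
Proof.
move=> H Hp i j k.
case D: [&& i != j, j != k & i != k]; last by apply: bar_nd => //; rewrite D.
case/and3P: D => ij jk ik; have [-> ->] := p2_sym Hp i j k ij jk ik; by [].
Qed.

Lemma half_barhalf_p2 : Shalf C N A x -> Sbarhalf C N A x -> poly_rel 2 x.
Proof.
move=> Hh Hb; apply/rel3 => i j k ij jk ik; apply: half0.
have d : [&& i != j, j != k & i != k] by rewrite ij jk ik.
by rewrite {1}(proj1 (Hb i j k) d) -(Hh i j k).
Qed.

Lemma half_bar_p2 : Shalf C N A x -> Sbar C N A x -> poly_rel 2 x.
Proof.
move=> Hh Hb; apply/rel3 => i j k ij jk ik; apply: half0.
by rewrite {1}(bar_d Hb i j k ij jk ik) -(Hh i j k).
Qed.

End L.

Theorem proposition1p2 (C : numClosedFieldType) (N : nat) (hN : (1 <= N)%N) :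
  (* equalities; S^{N-1,0} has d = 1, S^{N-1,1} has d = 2 *)
  [/\ ncequal (nccap (Sclass C N) (Sbar C N)) (polyg C N 1 (Sclass C N)),
      ncequal (nccap (Sclass C N) (Sbarhalf C N)) (polyg C N 2 (Sclass C N)),
      ncequal (nccap (Shalf C N) (Sbar C N)) (polyg C N 2 (Sbar C N)) &
      ncequal (nccap (Shalf C N) (Sbarhalf C N)) (polyg C N 2 (Shalf C N))] /\
  (* inclusions *)
  [/\ ncsub (polyg C N 1 (Sclass C N)) (polyg C N 2 (Sclass C N)) /\
        ncsub (polyg C N 2 (Sclass C N)) (Sclass C N),
      ncsub (polyg C N 1 (Sclass C N)) (polyg C N 2 (Sbar C N)) /\
        ncsub (polyg C N 2 (Sbar C N)) (Sbar C N),
      ncsub (polyg C N 2 (Sbar C N)) (polyg C N 2 (Shalf C N)) /\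
        ncsub (polyg C N 2 (Shalf C N)) (Shalf C N),
      ncsub (polyg C N 2 (Sclass C N)) (polyg C N 2 (Shalf C N)) /\
        ncsub (polyg C N 2 (Shalf C N)) (Sbarhalf C N) &
      (ncsub (Sbar C N) (Sbarhalf C N) /\ ncsub (Sbarhalf C N) (Sfree C N)) /\
      (ncsub (Sclass C N) (Shalf C N) /\ ncsub (Shalf C N) (Sfree C N))].
Proof.
split; first split.
- split=> A x _ [H1 H2]; split=> //; [exact: cb_p1 | exact: p1_bar].
- split=> A x _ [H1 H2]; split=> //.
    exact: half_barhalf_p2 (class_half H1) H2.
  exact: class_p2_barhalf.
- split=> A x _ [H1 H2]; split=> //; [exact: half_bar_p2 | exact: bar_p2_half].
- split=> A x _ [H1 H2]; split=> //; [exact: half_barhalf_p2 | exact: half_p2_barhalf].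
split.
- split=> A x _ [H1 H2] //; split=> //; exact: p1_p2.
- split=> A x _ [H1 H2] //; split; [exact: p1_bar | exact: p1_p2].
- split=> A x _ [H1 H2] //; split=> //; exact: bar_p2_half.
- split=> A x _ [H1 H2]; [split=> //; exact: class_half | exact: half_p2_barhalf].
- split; split=> A x _ // H; [exact: bar_barhalf | exact: class_half].
Qed.
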